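(* Let $\Xi,\Gamma,\Upsilon,\delta_s>0$, $L\ge1$, $\beta>1$, and $c_1,c_2>0$. Suppose $\delta_s\le2\Gamma\Xi^2$, set $\delta_h=c_1\delta_s$ and $\Delta_h=c_2\delta_s$, and define $$\lambda_W(\xi_s)=e^{\delta_s}\Upsilon L\Xi^3,\quad \lambda_X(\xi_s)=e^{\delta_s}\Upsilon(2\Gamma\Xi^2+1),$$ $$\lambda_W(\xi_h)=2e^{\delta_h}\Upsilon L\Xi^3\big(1+\tfrac1{\Delta_h}\big),\quad \lambda_X(\xi_h)=e^{\delta_h}\Upsilon\big(\beta+2\Gamma\Xi^2(\beta+1)(1+\tfrac1{\Delta_h})\big).$$ Then $\lambda_W(\xi_h)<\lambda_W(\xi_s)$ when $$c_1+\frac1{\delta_s}\log\Big(2\Big(1+\frac1{c_2\delta_s}\Big)\Big)<1,$$ and $\lambda_X(\xi_h)<\lambda_X(\xi_s)$ when $$c_1+\frac1{\delta_s}\log\Big(2\Gamma\Xi^2(1+\beta)\Big(1+\frac1{c_2\delta_s}\Big)+\beta\Big)-\frac1{\delta_s}\log(2\Gamma\Xi^2+1)<1.$$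
   Context: These quantities are the attention stability constants for full softmax attention (semantic dispersion $\delta_s$, i.e. the largest gap between query–key dot products of any query, token norms $\le\Xi$, $\|{\mathbf W}\|\le\Gamma$, $\|{\mathbf V}\|\le\Upsilon$, sequence length $L$) and for $k$-heavy-hitter sparse attention (semantic dispersion $\delta_h$ among unmasked keys, minimum gap $\Delta_h$ between unmasked and masked dot products, at most $\beta k$ queries per key). *)

(* Defs.v *)
From Stdlib Require Import Reals.
Open Scope R_scope.

Definition lamW_s (Xi Ups ds : R) (L : nat) : R :=
  exp ds * Ups * INR L * Xi ^ 3.
Definition lamX_s (Xi Gam Ups ds : R) : R :=
  exp ds * Ups * (2 * Gam * Xi ^ 2 + 1).

Definition lamW_h (Xi Ups dh Dh : R) (L : nat) : R :=
  2 * exp dh * Ups * INR L * Xi ^ 3 * (1 + / Dh).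
Definition lamX_h (Xi Gam Ups dh Dh beta : R) : R :=
  exp dh * Ups * (beta + 2 * Gam * Xi ^ 2 * (beta + 1) * (1 + / Dh)).

(* Main.v *)
Require Import Defs.
From Stdlib Require Import Reals Lra Lia.
Open Scope R_scope.

Lemma key (ds a X Y : R) : 0 < ds -> 0 < X -> 0 < Y ->
  a + / ds * ln X - / ds * ln Y < 1 -> exp (a * ds) * X < exp ds * Y.
Proof.
  intros hd hX hY H.
  assert (H2 : a * ds + ln X - ln Y < ds).
  { assert (E : ds * (a + / ds * ln X - / ds * ln Y) = a * ds + ln X - ln Y)
      by (field; lra).
    rewrite <- E. assert (ds * (a + / ds * ln X - / ds * ln Y) < ds * 1)
      by (apply Rmult_lt_compat_l; lra). lra. }
  assert (H3 : exp (a * ds + ln X) < exp (ds + ln Y)) by (apply exp_increasing; lra).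
  rewrite !exp_plus, !exp_ln in H3 by assumption. exact H3.
Qed.

Theorem corollary1 (Xi Gam Ups ds beta c1 c2 : R) (L : nat) :
  0 < Xi -> 0 < Gam -> 0 < Ups -> 0 < ds -> (1 <= L)%nat -> 1 < beta ->
  0 < c1 -> 0 < c2 -> ds <= 2 * Gam * Xi ^ 2 ->
  let dh := c1 * ds in
  let Dh := c2 * ds in
  (c1 + / ds * ln (2 * (1 + / (c2 * ds))) < 1 ->
     lamW_h Xi Ups dh Dh L < lamW_s Xi Ups ds L) /\
  (c1 + / ds * ln (2 * Gam * Xi ^ 2 * (1 + beta) * (1 + / (c2 * ds)) + beta)
      - / ds * ln (2 * Gam * Xi ^ 2 + 1) < 1 ->
     lamX_h Xi Gam Ups dh Dh beta < lamX_s Xi Gam Ups ds).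
Proof.
  intros hX hG hU hd hL hb h1 h2 hds dh Dh.
  assert (hD : 0 < / (c2 * ds)) by (apply Rinv_0_lt_compat; nra).
  assert (hLr : 0 < INR L) by (apply lt_0_INR; lia).
  assert (hX3 : 0 < Xi ^ 3) by (apply pow_lt; lra).
  assert (hX2 : 0 < Xi ^ 2) by (apply pow_lt; lra).
  assert (hGX : 0 < Gam * Xi ^ 2) by nra.
  split; intro H.
  - assert (K := key ds c1 (2 * (1 + / (c2 * ds))) 1 hd ltac:(nra) ltac:(lra)
       ltac:(rewrite ln_1; lra)).
    unfold lamW_h, lamW_s, dh, Dh.
    assert (P : 0 < Ups * INR L * Xi ^ 3) by (apply Rmult_lt_0_compat; nra).
    replace (2 * exp (c1 * ds) * Ups * INR L * Xi ^ 3 * (1 + / (c2 * ds)))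
      with ((exp (c1 * ds) * (2 * (1 + / (c2 * ds)))) * (Ups * INR L * Xi ^ 3)) by ring.
    replace (exp ds * Ups * INR L * Xi ^ 3) with ((exp ds * 1) * (Ups * INR L * Xi ^ 3)) by ring.
    apply Rmult_lt_compat_r; assumption.
  - assert (hA : 0 < 2 * Gam * Xi ^ 2 * (1 + beta) * (1 + / (c2 * ds))).
    { repeat apply Rmult_lt_0_compat; lra. }
    assert (K := key ds c1 (2 * Gam * Xi ^ 2 * (1 + beta) * (1 + / (c2 * ds)) + beta)
       (2 * Gam * Xi ^ 2 + 1) hd ltac:(lra) ltac:(lra) H).
    unfold lamX_h, lamX_s, dh, Dh.
    replace (exp (c1 * ds) * Ups * (beta + 2 * Gam * Xi ^ 2 * (beta + 1) * (1 + / (c2 * ds))))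
      with ((exp (c1 * ds) * (2 * Gam * Xi ^ 2 * (1 + beta) * (1 + / (c2 * ds)) + beta)) * Ups) by ring.
    replace (exp ds * Ups * (2 * Gam * Xi ^ 2 + 1)) with ((exp ds * (2 * Gam * Xi ^ 2 + 1)) * Ups) by ring.
    apply Rmult_lt_compat_r; assumption.
Qed.
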